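(* Let $w$ be a $1$-$2$ occurrence word. Then $w$ has property (Q) if and only if one of the following holds: (1) $w$ is empty; (2) $w=w'\,a$, where $a$ is an unmatched symbol of $w$ and $w'$ has property (Q); (3) $w=w_1\,a\,w_2\,a$, where $a$ is a symbol, no unmatched symbol of $w$ occurs in $w_2$, $w_2^\circ$ has property (P), and $w_1$ has property (Q). Moreover, such a decomposition, if it exists, is unique.
   Context: A $1$-$2$ occurrence word is a finite word in which each occurring symbol occurs once or twice; symbols occurring once are unmatched, those occurring twice are matched (this is relative to the word considered, e.g. a subword $w_1$ is itself regarded as a $1$-$2$ occurrence word). $w^\circ$ is the double occurrence word obtained by deleting the unmatched symbols of $w$. For a double occurrence word $u$, $\vec\Lambda(u)$ is the directed graph on its symbols with an arc $e\to f$ whenever $e\,f\,e\,f$ is a subsequence of $u$; for a $1$-$2$ occurrence word $w$, $\vec\Lambda(w)$ means $\vec\Lambda(w^\circ)$. A sink is a vertex with no out-neighbor (a symbol ''not interlaced on the right''). An unmatched symbol $a$ is covered by a matched symbol $b$ if $b\,a\,b$ is a subsequence of $w$. Property (P): $w$ is a double occurrence word and the sinks of $\vec\Lambda(w)$ form a dominating set (every non-sink has an out-neighbor that is a sink). Property (Q): $w$ is a $1$-$2$ occurrence word, $w^\circ$ has property (P), and no unmatched symbol of $w$ is covered in $w$ by a sink of $\vec\Lambda(w)$. *)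

(* Defs.v *)
From mathcomp Require Import all_boot.
Set Implicit Arguments. Unset Strict Implicit. Unset Printing Implicit Defensive.

Section Words.
Variable T : eqType.
Implicit Types (w u : seq T) (a b e f : T).

Definition one_two_word w : bool := all (fun x => count_mem x w <= 2) w.

Definition double_word w : bool := all (fun x => count_mem x w == 2) w.

Definition matched w a : bool := count_mem a w == 2.
Definition unmatched w a : bool := count_mem a w == 1.

Definition circ w : seq T := filter (fun x => count_mem x w != 1) w.

(* arc e -> f in the directed interlace graph of a double occurrence word u:
   e f e f is a subsequence of u *)
Definition arc u e f : bool := subseq [:: e; f; e; f] u.

Definition sink u e : bool := (e \in u) && ~~ has (arc u e) u.

Definition propP u : bool :=
  double_word u &&
  all (fun e => ~~ sink u e ==> has (fun f => arc u e f && sink u f) u) u.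

Definition covers w b a : bool := subseq [:: b; a; b] w.

Definition propQ w : bool :=
  [&& one_two_word w, propP (circ w) &
      all (fun a => unmatched w a ==>
             ~~ has (fun b => sink (circ w) b && covers w b a) (circ w)) w].

Definition dec2 w w' a : Prop :=
  w = rcons w' a /\ unmatched w a /\ propQ w'.

Definition dec3 w w1 a w2 : Prop :=
  w = w1 ++ a :: w2 ++ [:: a] /\
  (forall x, unmatched w x -> x \notin w2) /\
  propP (circ w2) /\ propQ w1.

End Words.

(* Main.v *)
Require Import Defs.
From mathcomp Require Import all_boot zify.
Set Implicit Arguments. Unset Strict Implicit. Unset Printing Implicit Defensive.

Section H.
Variable T : eqType.
Implicit Types (w s p : seq T) (a b e f g h x y : T).

Lemma subseq_catP p s1 s2 : subseq p (s1 ++ s2) ->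
  exists p1 p2, [/\ p = p1 ++ p2, subseq p1 s1 & subseq p2 s2].
Proof.
case/subseqP=> m sz ->.
exists (mask (take (size s1) m) s1), (mask (drop (size s1) m) s2).
rewrite -mask_cat ?cat_take_drop ?mask_subseq //.
by rewrite size_takel // sz size_cat leq_addr.
Qed.

Lemma memc y s : (y \in s) = (0 < count_mem y s).
Proof. by rewrite -has_pred1 has_count. Qed.

Lemma cnt_sub y p s : subseq p s -> count_mem y p <= count_mem y s.
Proof. exact: leq_count_subseq. Qed.

Lemma otwP w : reflect (forall y, count_mem y w <= 2) (one_two_word w).
Proof.
apply: (iffP allP) => [H y|H y _]; last exact: H.
case: (boolP (y \in w)) => [/H //|/count_memPn -> //].
Qed.


Definition A w e f := subseq [:: e; f; e; f] w.
Definition Snk w e := matched w e && ~~ has (A w e) w.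
Definition PP w := forall e, matched w e -> has (A w e) w ->
  exists g, A w e g /\ Snk w g.
Definition QQ w := [/\ one_two_word w, PP w &
  forall a b, unmatched w a -> Snk w b -> ~~ covers w b a].

Lemma A_cnt w e f : A w e f -> 2 <= count_mem e w /\ 2 <= count_mem f w.
Proof.
move=> H; have := cnt_sub e H; have := cnt_sub f H => /=; rewrite !eqxx.
by case: (e == f); case: (f == e) => /= ? ?; split; lia.
Qed.

Lemma A_mem w e f : A w e f -> f \in w.
Proof. by move/A_cnt=> [_ h]; rewrite memc; lia. Qed.

Lemma SnkA w e f : Snk w e -> ~ A w e f.
Proof. by case/andP=> _ /hasPn H /[dup] /A_mem /H /negP. Qed.

Lemma SnkI w e : matched w e -> (forall f, ~ A w e f) -> Snk w e.
Proof. by move=> m H; rewrite /Snk m /=; apply/hasPn => f _; apply/negP/H. Qed.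

Lemma cnt_filter (P : pred T) y s : P y -> count_mem y (filter P s) = count_mem y s.
Proof.
move=> Py; elim: s => //= z s IH; case Pz: (P z) => /=; rewrite IH //.
by case: eqP => // E; subst; rewrite Py in Pz.
Qed.

Lemma mem_circ w y : one_two_word w -> (y \in circ w) = matched w y.
Proof.
move/otwP=> H; rewrite /circ mem_filter /matched memc; have := H y; lia.
Qed.

Lemma arc_circ w e f : one_two_word w -> Defs.arc (circ w) e f = A w e f.
Proof.
move=> _; rewrite /Defs.arc /circ subseq_filter.
case h: (subseq _ w); rewrite ?andbF ?andbT //.
have [h1 h2] := A_cnt h.
have E1 : (count_mem e w != 1) by apply/eqP; lia.
have E2 : (count_mem f w != 1) by apply/eqP; lia.
by rewrite /= E1 E2.
Qed.

Lemma sink_circ w e : one_two_word w -> sink (circ w) e = Snk w e.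
Proof.
move=> o; rewrite /sink /Snk mem_circ //; congr (_ && ~~ _).
apply/hasP/hasP => [[f _]|[f fw]].
  by rewrite arc_circ // => h; exists f => //; exact: A_mem h.
move=> h; exists f; last by rewrite arc_circ.
by rewrite mem_circ // /matched; have [_ ?] := A_cnt h; move/otwP: o => /(_ f); lia.
Qed.

Lemma propPE w : one_two_word w -> propP (circ w) <-> PP w.
Proof.
move=> o; rewrite /propP; split.
  case/andP=> _ /allP H e me hA.
  have /H : e \in circ w by rewrite mem_circ.
  rewrite sink_circ // /Snk me hA /= => /hasP [g _ /andP[]].
  by rewrite arc_circ // sink_circ // => ??; exists g.
move=> H; apply/andP; split.
  apply/allP => y; rewrite mem_circ // => my.
  by rewrite cnt_filter //; move/eqP: my => ->.
apply/allP => e; rewrite mem_circ // => me; apply/implyP.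
rewrite sink_circ // /Snk me /= negbK => /(H e me) [g [h1 h2]].
apply/hasP; exists g; last by rewrite arc_circ // sink_circ // h1 h2.
by rewrite mem_circ //; case/andP: h2.
Qed.

Lemma propQE w : propQ w <-> QQ w.
Proof.
rewrite /propQ /QQ; split.
  case/and3P=> o /(propPE o) p /allP c; split => // a b ua sb.
  have /c : a \in w by rewrite memc; move/eqP: ua => ->.
  rewrite ua /= => /hasPn /(_ b); rewrite sink_circ // sb /=; apply.
  by rewrite mem_circ //; case/andP: sb.
case=> o p c; apply/and3P; split => //; first exact/(propPE o).
apply/allP => a _; apply/implyP => ua; apply/hasPn => b _.
by rewrite sink_circ //; apply/negP => /andP [sb cv]; move: (c a b ua sb); rewrite cv.
Qed.


Lemma sub_drop_pre y p s1 s2 : y \notin s1 -> subseq (y :: p) (s1 ++ s2) ->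
  subseq (y :: p) s2.
Proof.
elim: s1 => //= z s1 IH; rewrite in_cons negb_or => /andP [yz ys].
by rewrite (negbTE yz); apply: IH.
Qed.

Lemma sub_drop_last p y s z : y != z -> subseq (rcons p y) (rcons s z) ->
  subseq (rcons p y) s.
Proof.
move=> yz; rewrite -(cats1 s) => /subseq_catP [p1 [p2 [E s1 s2]]].
case: p2 E s2 => [|a [|b r]] E s2.
- by rewrite E cats0.
- move: s2; rewrite sub1seq mem_seq1 => /eqP az.
  by move: E; rewrite cats1 => /rcons_inj [_ ya]; rewrite ya az eqxx in yz.
- by have := size_subseq s2.
Qed.

Lemma sub_drop_suf p s1 s2 : all (fun z => z \notin s2) p ->
  subseq p (s1 ++ s2) -> subseq p s1.
Proof.
move=> /allP H /subseq_catP [p1 [[|z r] [E s1' s2']]]; first by rewrite E cats0.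
have : z \in s2 by apply: (mem_subseq s2'); rewrite inE eqxx.
have := H z; rewrite E mem_cat inE eqxx orbT => /(_ isT) /negP; done.
Qed.


Section M.
Variables (w1 w2 : seq T) (x : T).
Local Notation W := (w1 ++ x :: w2 ++ [:: x]).
Local Notation R := (x :: w2 ++ [:: x]).
Hypothesis o : one_two_word W.

Lemma cW y : count_mem y W = count_mem y w1 + count_mem y w2 + (x == y).*2.
Proof. rewrite count_cat /= count_cat /=; case: (x == y) => /=; lia. Qed.

Lemma cWx : count_mem x W = count_mem x w1 + count_mem x w2 + 2.
Proof. by rewrite cW eqxx. Qed.

Lemma cle y : count_mem y w1 + count_mem y w2 + (x == y).*2 <= 2.
Proof. by rewrite -cW; move/otwP: o. Qed.

Lemma cx : count_mem x w1 = 0 /\ count_mem x w2 = 0.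
Proof. by have := cle x; rewrite eqxx /=; lia. Qed.

Lemma xn1 : x \notin w1.
Proof. by apply/count_memPn; case: cx. Qed.
Lemma xn2 : x \notin w2.
Proof. by apply/count_memPn; case: cx. Qed.

Lemma cy y : y != x -> count_mem y W = count_mem y w1 + count_mem y w2.
Proof. by rewrite cW eq_sym => /negbTE ->; rewrite addn0. Qed.

Lemma cyle y : y != x -> count_mem y w1 + count_mem y w2 <= 2.
Proof. by move=> yx; rewrite -cy //; move/otwP: o. Qed.

Lemma WE : W = rcons (w1 ++ x :: w2) x.
Proof. by rewrite rcons_cat /= -cats1. Qed.

Lemma L1 g : ~ A W x g.
Proof.
rewrite /A; case: (eqVneq g x) => [->|gx] H.
  by have := cnt_sub x H; rewrite /= eqxx /= cW eqxx /=; case: cx => -> ->.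
move: H; rewrite WE -[[:: x; g; x; g]]/(rcons [:: x; g; x] g).
move/(sub_drop_last gx)/(cnt_sub x); rewrite /= eqxx count_cat /=.
by rewrite (negbTE gx) eqxx /=; case: cx => -> ->.
Qed.

Lemma L2 f : f \in w1 -> f \in w2 -> A W f x.
Proof.
move=> f1 f2; rewrite /A -[[:: f; x; f; x]]/([:: f] ++ [:: x; f; x]).
apply: cat_subseq; first by rewrite sub1seq.
rewrite /= eqxx -[[:: f; x]]/([:: f] ++ [:: x]).
by apply: cat_subseq; rewrite ?sub1seq ?inE ?eqxx.
Qed.

Lemma sub2W s : subseq s w2 -> subseq s W.
Proof.
move=> H; apply: (subseq_trans H); apply: (subseq_trans _ (suffix_subseq w1 _)).
apply: (subseq_trans _ (subseq_cons _ x)); exact: prefix_subseq.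
Qed.

Lemma sub1W s : subseq s w1 -> subseq s W.
Proof. by move=> H; apply: (subseq_trans H); exact: prefix_subseq. Qed.

Lemma L3 f g : f \notin w1 -> f != x -> A W f g -> A w2 f g.
Proof.
move=> f1 fx; rewrite /A => /(sub_drop_pre f1) /=; rewrite (negbTE fx).
case: (eqVneq g x) => [->|gx] H.
  have := cnt_sub x H; rewrite /= count_cat /= eqxx (negbTE fx) /=.
  by case: cx => _ ->.
move: H; rewrite cats1 -[[:: f; g; f; g]]/(rcons [:: f; g; f] g).
exact: sub_drop_last.
Qed.

Lemma L4 f g : f \notin w2 -> f != x -> A W f g ->
  A w1 f g \/ (covers w1 f g /\ g \in w2).
Proof.
move=> f2 fx /subseq_catP [p1 [p2 [E s1 s2]]].
have fR : f \notin R by rewrite inE negb_or fx mem_cat inE negb_or f2.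
have nf : forall r, f \in r -> subseq r R -> False.
  by move=> r fr sr; move/negP: fR; apply; apply: (mem_subseq sr).
case: p1 E s1 => [|a1 [|a2 [|a3 [|a4 [|a5 p1]]]]] /= E s1.
- by case: (nf p2 _ s2); rewrite -E inE eqxx.
- by case: E => _ E; case: (nf p2 _ s2); rewrite -E !inE eqxx orbT.
- by case: E => _ _ E; case: (nf p2 _ s2); rewrite -E inE eqxx.
- move: s1; case: E => <- <- <- E s1; right; split => //.
  have gR : g \in R by apply: (mem_subseq s2); rewrite -E inE eqxx.
  have gx : g != x.
    by apply/eqP => gx; move: xn1; rewrite -gx (mem_subseq s1) // !inE eqxx orbT.
  by move: gR; rewrite inE (negbTE gx) mem_cat inE (negbTE gx) orbF.
- by move: s1; case: E => <- <- <- <- E s1; left.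
- by case: E.
Qed.

Lemma L5 a : covers W x a -> a \in w2.
Proof.
rewrite /covers => /(sub_drop_pre xn1) /=; rewrite eqxx => H.
case: (eqVneq a x) => [E|ax].
  by have := cnt_sub x H; rewrite E /= eqxx count_cat /= eqxx; case: cx => _ ->.
have : a \in w2 ++ [:: x] by apply: (mem_subseq H); rewrite inE eqxx.
by rewrite mem_cat inE (negbTE ax) orbF.
Qed.

Lemma L6 b a : b \notin w1 -> b != x -> covers W b a -> a \in w2.
Proof.
move=> b1 bx; rewrite /covers => /(sub_drop_pre b1) /=; rewrite (negbTE bx).
rewrite cats1 -[[:: b; a; b]]/(rcons [:: b; a] b) => /(sub_drop_last bx) H.
by apply: (mem_subseq H); rewrite !inE eqxx orbT.
Qed.

Lemma L7 b a : b \notin w2 -> b != x -> a \notin w2 -> a != x ->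
  covers W b a -> covers w1 b a.
Proof.
move=> b2 bx a2 ax; apply: sub_drop_suf.
by rewrite /= !inE !mem_cat !inE !negb_or bx ax b2 a2.
Qed.

Lemma L8 b a : covers w1 b a -> a \in w2 -> A W b a.
Proof.
move=> H a2; rewrite /A -[[:: b; a; b; a]]/([:: b; a; b] ++ [:: a]).
by apply: cat_subseq => //; rewrite sub1seq inE mem_cat a2 orbT.
Qed.


Lemma ot2 : one_two_word w2.
Proof. by apply/otwP => y; have := cle y; lia. Qed.

Lemma Cx y : y \in w2 -> covers W x y.
Proof.
move=> y2; rewrite /covers -[[:: x; y; x]]/([::] ++ [:: x; y; x]).
apply: cat_subseq; first exact: sub0seq.
rewrite /= eqxx -[[:: y; x]]/([:: y] ++ [:: x]).
by apply: cat_subseq; rewrite ?sub1seq ?inE ?eqxx.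
Qed.

Lemma SnkX : Snk W x.
Proof. by apply: SnkI; [rewrite /matched cW eqxx; case: cx => -> -> | exact: L1]. Qed.

Lemma hasI s e f : A s e f -> has (A s e) s.
Proof. by move=> h; apply/hasP; exists f => //; exact: A_mem h. Qed.

Lemma neqx s y : x \notin s -> y \in s -> y != x.
Proof. by move=> xs ys; apply/eqP => E; move: xs; rewrite -E ys. Qed.

Ltac mc := rewrite /matched /unmatched ?memc in *.

Lemma main3 : QQ W <-> [/\ (forall y, unmatched W y -> y \notin w2), PP w2 & QQ w1].
Proof.
split.
  case=> _ PW NC; split.
  - move=> y uy; apply/negP => y2; have := NC y x uy SnkX; by rewrite Cx.
  - move=> e me /hasP [f _ hf].
    have e2 : e \in w2 by rewrite memc; move/eqP: me => ->.
    have ex := neqx xn2 e2; have le := cyle ex; move/eqP: me => me.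
    have e1 : e \notin w1 by apply/count_memPn; lia.
    have [|g [hg sg]] := PW e _ (hasI (sub2W hf)).
      by rewrite /matched cy //; apply/eqP; lia.
    exists g; have hg2 := L3 e1 ex hg; split => //.
    apply: SnkI => [|h /sub2W /(SnkA sg) //].
    have [_ c2g] := A_cnt hg2; have gx := neqx xn2 (A_mem hg2).
    by have lg := cyle gx; rewrite /matched; apply/eqP; lia.
  split.
  - by apply/otwP => y; have := cle y; lia.
  - move=> e me /hasP [f _ hf].
    have e1 : e \in w1 by rewrite memc; move/eqP: me => ->.
    have ex := neqx xn1 e1; have le := cyle ex; move/eqP: me => me.
    have e2 : e \notin w2 by apply/count_memPn; lia.
    have [|g [hg sg]] := PW e _ (hasI (sub1W hf)).
      by rewrite /matched cy //; apply/eqP; lia.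
    case: (L4 e2 ex hg) => [hg1|[cv g2]].
      exists g; split => //; apply: SnkI => [|h /sub1W /(SnkA sg) //].
      have [_ c1g] := A_cnt hg1; have gx := neqx xn1 (A_mem hg1).
      by have lg := cyle gx; rewrite /matched; apply/eqP; lia.
    have g1 : g \in w1 by apply: (mem_subseq cv); rewrite !inE eqxx orbT.
    by case: (SnkA sg (L2 g1 g2)).
  - move=> a b ua sb; apply/negP => cv.
    have b1 : b \in w1 by rewrite memc; case/andP: sb => /eqP -> _.
    have bx := neqx xn1 b1; have le := cyle bx; case/andP: sb => /eqP mb nb.
    have b2 : b \notin w2 by apply/count_memPn; lia.
    have sW : Snk W b.
      apply: SnkI => [|h hh]; first by rewrite /matched cy //; apply/eqP; lia.
      have [|g [hg sg]] := PW b _ (hasI hh).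
        by rewrite /matched cy //; apply/eqP; lia.
      case: (L4 b2 bx hg) => [hg1|[cv' g2]].
        by move/hasP: nb; apply; exists g => //; exact: A_mem hg1.
      have g1 : g \in w1 by apply: (mem_subseq cv'); rewrite !inE eqxx orbT.
      by case: (SnkA sg (L2 g1 g2)).
    have a1 : a \in w1 by rewrite memc; move/eqP: ua => ->.
    have ax := neqx xn1 a1.
    case: (boolP (a \in w2)) => a2; first by case: (SnkA sW (L8 cv a2)).
    have ua' : unmatched W a.
      by rewrite /unmatched cy //; move/count_memPn: a2 => ->; rewrite addn0.
    by move/negP: (NC a b ua' sW); apply; exact: sub1W cv.
case=> H2 P2 [o1 P1 N1].
have K : forall b, Snk w1 b -> Snk W b.
  move=> b sb; have /andP[/eqP mb nb] := sb.
  have b1 : b \in w1 by rewrite memc mb.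
  have bx := neqx xn1 b1; have := cyle bx => le.
  have b2 : b \notin w2 by apply/count_memPn; lia.
  apply: SnkI => [|h hh]; first by rewrite /matched cy //; apply/eqP; lia.
  case: (L4 b2 bx hh) => [hg1|[cv h2]]; first exact: SnkA sb hg1.
  have h1 : h \in w1 by apply: (mem_subseq cv); rewrite !inE eqxx orbT.
  have hx := neqx xn1 h1; have := cyle hx.
  move: h1 h2; rewrite !memc => h1 h2 lh.
  have uh : unmatched w1 h by rewrite /unmatched; apply/eqP; lia.
  by have := N1 h b uh sb; rewrite cv.
split => //.
- move=> e me /hasP [f _ hf].
  case: (eqVneq e x) => [E|ex]; first by rewrite E in hf; case: (L1 hf).
  have := cyle ex; move: me; rewrite /matched cy // => /eqP me le.
  case E1: (count_mem e w1) => [|[|[|k]]].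
  + have e1 : e \notin w1 by apply/count_memPn.
    have hf2 := L3 e1 ex hf.
    have [|g [hg sg]] := P2 e _ (hasI hf2).
      by rewrite /matched; apply/eqP; lia.
    exists g; split; first exact: sub2W.
    have g2 := A_mem hg; have gx := neqx xn2 g2.
    have /andP [/eqP mg _] := sg; have := cyle gx => lg.
    have g1 : g \notin w1 by apply/count_memPn; lia.
    apply: SnkI => [|h /(L3 g1 gx) /(SnkA sg) //].
    by rewrite /matched cy //; apply/eqP; lia.
  + exists x; split; last exact: SnkX.
    by apply: L2; rewrite memc; lia.
  + have e2 : e \notin w2 by apply/count_memPn; lia.
    case: (boolP (has (A w1 e) w1)) => hh.
      have [|g [hg sg]] := P1 e _ hh; first by rewrite /matched E1.
      by exists g; split; [exact: sub1W | exact: K].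
    case: (L4 e2 ex hf) => [hf1|[cv f2]].
      by move/negP: hh; case; exact: hasI hf1.
    have f1 : f \in w1 by apply: (mem_subseq cv); rewrite !inE eqxx orbT.
    have fx := neqx xn1 f1; have := cyle fx.
    move: f1 f2; rewrite !memc => f1 f2 lf.
    have uf : unmatched w1 f by rewrite /unmatched; apply/eqP; lia.
    have se : Snk w1 e by rewrite /Snk /matched E1 hh.
    by have := N1 f e uf se; rewrite cv.
  + lia.
- move=> a b ua sb; apply/negP => cv.
  have a2 := H2 a ua.
  have ax : a != x.
    by apply/eqP => E; move: ua; rewrite E /unmatched cW eqxx; case: cx => -> ->.
  case: (eqVneq b x) => [E|bx]; first by rewrite E in cv; rewrite (L5 cv) in a2.
  have := cyle bx; have /andP [/eqP mb _] := sb; rewrite cy // in mb => lb.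
  case E1: (count_mem b w1) => [|[|[|k]]].
  + have b1 : b \notin w1 by apply/count_memPn.
    by rewrite (L6 b1 bx cv) in a2.
  + have b1 : b \in w1 by rewrite memc E1.
    have b2 : b \in w2 by rewrite memc; lia.
    by case: (SnkA sb (L2 b1 b2)).
  + have b2 : b \notin w2 by apply/count_memPn; lia.
    have cv1 := L7 b2 bx a2 ax cv.
    have sb1 : Snk w1 b.
      apply: SnkI => [|h /sub1W /(SnkA sb) //]; by rewrite /matched E1.
    have ua1 : unmatched w1 a.
      by move: ua; rewrite /unmatched cy //; move/count_memPn: a2 => ->; rewrite addn0.
    by have := N1 a b ua1 sb1; rewrite cv1.
  + lia.
Qed.

End M.


Section C2.
Variables (v : seq T) (x : T).
Local Notation W := (rcons v x).
Hypothesis o : one_two_word W.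
Hypothesis ux : unmatched W x.

Lemma xnv : x \notin v.
Proof. by apply/count_memPn; move: ux; rewrite /unmatched -cats1 count_cat /= eqxx; lia. Qed.

Lemma cv y : y != x -> count_mem y W = count_mem y v.
Proof. by move=> yx; rewrite -cats1 count_cat /= eq_sym (negbTE yx); lia. Qed.

Lemma vW s : subseq s v -> subseq s W.
Proof. by move=> H; apply: (subseq_trans H); rewrite -cats1 prefix_subseq. Qed.

Lemma AE e f : A W e f = A v e f.
Proof.
apply/idP/idP => [H|/vW //].
case: (eqVneq f x) => [E|fx].
  by have [_] := A_cnt H; move: ux; rewrite -E /unmatched => /eqP ->.
by move: H; rewrite /A -[[:: e; f; e; f]]/(rcons [:: e; f; e] f); apply: sub_drop_last.
Qed.

Lemma mE y : matched W y = matched v y.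
Proof.
case: (eqVneq y x) => [->|yx]; last by rewrite /matched cv.
by move: ux; rewrite /matched /unmatched => /eqP ->; move/count_memPn: xnv => ->.
Qed.

Lemma SE e : Snk W e = Snk v e.
Proof.
rewrite /Snk mE; congr (_ && ~~ _).
apply/hasP/hasP => [[f _ h]|[f _ h]].
  by rewrite AE in h; exists f => //; exact: A_mem h.
by rewrite -AE in h; exists f => //; exact: A_mem h.
Qed.

Lemma main2 : QQ W <-> QQ v.
Proof.
have PE : PP W <-> PP v.
  split => H e me hh.
    have [||g [h1 h2]] := H e; first by rewrite mE.
      by move/hasP: hh => [f _ hf]; apply: (@hasI _ _ f); rewrite AE.
    by exists g; rewrite -AE -SE.
  have [||g [h1 h2]] := H e; first by rewrite -mE.
    by move/hasP: hh => [f _ hf]; apply: (@hasI _ _ f); rewrite -AE.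
  by exists g; rewrite AE SE.
split; case=> o' p c; split.
- by apply/otwP => y; move/otwP: o => /(_ y); apply: leq_trans; rewrite -cats1 count_cat leq_addr.
- exact/PE.
- move=> a b ua sb; apply/negP => cvr.
  have ax : a != x by apply/eqP => E; move: ua; rewrite E /unmatched; move/count_memPn: xnv => ->.
  have ua' : unmatched W a by rewrite /unmatched cv.
  by move/negP: (c a b ua' (etrans (SE b) sb)); apply; apply: vW.
- done.
- exact/PE.
- move=> a b ua sb; apply/negP => cvr.
  have bx : b != x.
    by apply/eqP => E; move: sb; rewrite E /Snk mE /matched; move/count_memPn: xnv => ->.
  have cv' : covers v b a.
    by move: cvr; rewrite /covers -[[:: b; a; b]]/(rcons [:: b; a] b); apply: sub_drop_last.
  have av : a \in v by apply: (mem_subseq cv'); rewrite !inE eqxx orbT.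
  have ax := neqx xnv av.
  have ua' : unmatched v a by rewrite /unmatched -cv.
  by move/negP: (c a b ua' (etrans (esym (SE b)) sb)); apply.
Qed.

End C2.


Lemma split_uniq y s1 s1' t t' : y \notin s1 -> y \notin s1' ->
  s1 ++ y :: t = s1' ++ y :: t' -> s1 = s1' /\ t = t'.
Proof.
elim: s1 s1' => [|z s1 IH] [|z' s1'] /=.
- by move=> _ _ [].
- by move=> _; rewrite inE negb_or => /andP [/negP yz _] [E _]; case: yz; rewrite E.
- by rewrite inE negb_or => /andP [/negP yz _] _ [E _]; case: yz; rewrite E.
rewrite !inE !negb_or => /andP [_ h1] /andP [_ h2] [-> E].
by have [-> ->] := IH _ h1 h2 E.
Qed.

Lemma W3 w1 (x : T) w2 : w1 ++ x :: w2 ++ [:: x] = rcons (w1 ++ x :: w2) x.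
Proof. by rewrite rcons_cat /= -cats1. Qed.

End H.


Theorem lemma18 (T : eqType) (w : seq T) :
  one_two_word w ->
  (propQ w <->
     [\/ w = [::],
         (exists w' a, dec2 w w' a) |
         (exists w1 a w2, dec3 w w1 a w2)])
  /\ (w = [::] -> (forall w' a, ~ dec2 w w' a) /\ (forall w1 a w2, ~ dec3 w w1 a w2))
  /\ (forall w' a w1 b w2, dec2 w w' a -> ~ dec3 w w1 b w2)
  /\ (forall w' a w'' b, dec2 w w' a -> dec2 w w'' b -> w' = w'' /\ a = b)
  /\ (forall w1 a w2 w1' b w2', dec3 w w1 a w2 -> dec3 w w1' b w2' ->
        [/\ w1 = w1', a = b & w2 = w2']).
Proof.
move=> o.
have D23 : forall w' a w1 b w2, dec2 w w' a -> ~ dec3 w w1 b w2.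
  move=> w' a w1 b w2 [E [ua _]] [E' _].
  have o1 : one_two_word (w1 ++ b :: w2 ++ [:: b]) by rewrite -E'.
  rewrite E' in ua; rewrite E W3 in E'; case: (rcons_inj E') => _ ab; subst b.
  move: ua; rewrite /unmatched (cWx o1) => /eqP; lia.
have E33 : forall w1 a w2 w1' b w2', w = w1 ++ a :: w2 ++ [:: a] ->
        w = w1' ++ b :: w2' ++ [:: b] -> [/\ w1 = w1', a = b & w2 = w2'].
  move=> w1 a w2 w1' b w2' E E'.
  have o1 : one_two_word (w1 ++ a :: w2 ++ [:: a]) by rewrite -E.
  have o' : one_two_word (w1' ++ b :: w2' ++ [:: b]) by rewrite -E'.
  rewrite E !W3 in E'; case: (rcons_inj E') => {}E ab; subst b.
  have [e1 e2] := split_uniq (xn1 o1) (xn1 o') E.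
  by split.
have D33 : forall w1 a w2 w1' b w2', dec3 w w1 a w2 -> dec3 w w1' b w2' ->
        [/\ w1 = w1', a = b & w2 = w2'].
  by move=> w1 a w2 w1' b w2' [E _] [E' _]; apply: E33.
have D22 : forall w' a w'' b, dec2 w w' a -> dec2 w w'' b -> w' = w'' /\ a = b.
  move=> w' a w'' b [E _] [E' _]; rewrite E in E'.
  by case: (rcons_inj E') => -> ->; split.
have P2 : w = [::] -> (forall w' a, ~ dec2 w w' a) /\ (forall w1 a w2, ~ dec3 w w1 a w2).
  by move=> ->; split => [w' a [E _]|w1 a w2 [E _]]; [case: w' E | case: w1 E].
split; last by do 3 (split => //).
case/lastP: w o D23 D33 D22 E33 {P2} => [|v x] o D23 D33 D22 E33.
  by split => // _; constructor 1.
have : 0 < count_mem x (rcons v x) by rewrite -memc mem_rcons inE eqxx.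
move/otwP: (o) => /(_ x) le1 ge1.
case: (eqVneq (count_mem x (rcons v x)) 1) => [ux|mx].
  have ux' : unmatched (rcons v x) x by apply/eqP.
  split.
    move=> /propQE /(main2 o ux') /propQE qv; constructor 2.
    by exists v, x.
  case=> [|[w' [a [E [ua q]]]]|[w1 [a [w2 d]]]].
  - by case: (v).
  - case: (rcons_inj E) => E1 E2; subst w' a.
    by apply/propQE/(main2 o ux')/propQE.
  - case: d => E _; have E' := E; rewrite W3 in E'.
    case: (rcons_inj E') => _ xa; subst a.
    move: ux; rewrite E count_cat /= count_cat /= eqxx => /eqP ?; exfalso; lia.
have xv : x \in v.
  by rewrite memc; move: mx le1; rewrite -cats1 count_cat /= eqxx; lia.
have [w1 [w2 Ev]] : exists w1 w2, v = w1 ++ x :: w2.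
  by case/splitPr: xv => w1 w2; exists w1, w2.
subst v; clear le1 ge1 mx xv.
rewrite -W3 in o D23 D33 D22 E33 *.
split.
  move=> /propQE /(main3 o) [H2 P2 Q1]; constructor 3.
  exists w1, x, w2; split => //; split => //; split.
  - by apply/(propPE (ot2 o)).
  - exact/propQE.
case=> [|[w' [a d]]|[w1' [a [w2' d]]]].
- by move=> /(f_equal size); rewrite size_cat /= addnS.
- case: d => E [ua _]; rewrite W3 in E; case: (rcons_inj E) => _ ax; subst a.
  by move: ua; rewrite /unmatched (cWx o) => /eqP ?; exfalso; lia.
- case: (d) => E [H2 [P2 Q1]].
  case: (E33 _ _ _ _ _ _ E (erefl _)) => ? ? ?; subst.
  apply/propQE/(main3 o); split => //; last exact/propQE.
  exact/(propPE (ot2 o)).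
Qed.
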